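(* Let $\widetilde{\mathcal{A}}^+,\widetilde{\mathcal{A}}^-\subseteq\mathbb{R}^d$. If the problem $$\max_{\|y\|_*\le1,\ b\in\mathbb{R}} h(y,b;\widetilde{\mathcal{A}}^+,\widetilde{\mathcal{A}}^-)$$ has an optimal solution and a positive optimal value, then every optimal solution $(\hat y,\hat b)$ satisfies $\|\hat y\|_*=1$. If moreover the norm $\|\cdot\|$ and its dual $\|\cdot\|_*$ are both strictly convex (i.e. $\|\beta w+(1-\beta)z\|<\beta\|w\|+(1-\beta)\|z\|$ whenever $\beta\in(0,1)$ and $w,z$ are not collinear, and likewise for $\|\cdot\|_*$), then the optimal solution is unique.
   Context: $\|\cdot\|$ is a norm on $\mathbb{R}^d$ with dual norm $\|y\|_*=\max_{\|w\|\le1}y^\top w$. For sets $\widetilde{\mathcal{A}}^+,\widetilde{\mathcal{A}}^-\subseteq\mathbb{R}^d$ the margin function is $$h(y,b;\widetilde{\mathcal{A}}^+,\widetilde{\mathcal{A}}^-)=\min\Big\{\min_{x\in\widetilde{\mathcal{A}}^+}(y^\top x+b),\ \min_{x\in\widetilde{\mathcal{A}}^-}(-y^\top x-b)\Big\},$$ which equals $\tfrac12\big(\min_{x\in\widetilde{\mathcal{A}}^+}y^\top x-\max_{x\in\widetilde{\mathcal{A}}^-}y^\top x\big)-\big|b+\tfrac12\big(\min_{x\in\widetilde{\mathcal{A}}^+}y^\top x+\max_{x\in\widetilde{\mathcal{A}}^-}y^\top x\big)\big|$. *)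

(* Defs.v *)
From HB Require Import structures.
From mathcomp Require Import all_boot all_order all_algebra.
From mathcomp Require Import all_classical all_reals all_analysis.
Set Implicit Arguments. Unset Strict Implicit. Unset Printing Implicit Defensive.
Import Order.TTheory GRing.Theory Num.Theory.
Local Open Scope classical_set_scope.
Local Open Scope ring_scope.

Section Defs.
Variables (R : realType) (d : nat).
Local Notation V := 'rV[R]_d.

Definition dotp (y x : V) : R := \sum_(i < d) y 0 i * x 0 i.

Definition is_norm (N : V -> R) : Prop :=
  [/\ forall x, 0 <= N x,
      forall x, N x = 0 -> x = 0,
      forall (a : R) x, N (a *: x) = `|a| * N x
    & forall x z, N (x + z) <= N x + N z].

Definition dual_norm (N : V -> R) (y : V) : R :=
  sup [set dotp y w | w in [set w | N w <= 1]].

Definition collinear (w z : V) : Prop :=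
  exists a b : R, (a != 0 \/ b != 0) /\ a *: w + b *: z = 0.

Definition strictly_convex (N : V -> R) : Prop :=
  forall (beta : R) (w z : V), 0 < beta < 1 -> ~ collinear w z ->
    N (beta *: w + (1 - beta) *: z) < beta * N w + (1 - beta) * N z.

(* margin function h(y,b; A+, A-), with min read as the infimum in \bar R *)
Definition margin (Ap Am : set V) (y : V) (b : R) : \bar R :=
  mine (ereal_inf [set (dotp y x + b)%:E | x in Ap])
       (ereal_inf [set (- dotp y x - b)%:E | x in Am]).

Definition opt_value (N : V -> R) (Ap Am : set V) : \bar R :=
  ereal_sup [set margin Ap Am p.1 p.2 | p in [set p : V * R | dual_norm N p.1 <= 1]].

Definition is_optimal (N : V -> R) (Ap Am : set V) (y : V) (b : R) : Prop :=
  dual_norm N y <= 1 /\ margin Ap Am y b = opt_value N Ap Am.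

End Defs.

(* Main.v *)
Require Import Defs.
From HB Require Import structures.
From mathcomp Require Import all_boot all_order all_algebra.
From mathcomp Require Import all_classical all_reals all_analysis.
From mathcomp Require Import lra.
Set Implicit Arguments. Unset Strict Implicit. Unset Printing Implicit Defensive.
Import Order.TTheory GRing.Theory Num.Theory.
Local Open Scope classical_set_scope.
Local Open Scope ring_scope.

Lemma dotpDl (R : realType) (d : nat) (y z x : 'rV[R]_d) :
  dotp (y + z) x = dotp y x + dotp z x.
Proof. by rewrite /dotp -big_split; apply: eq_bigr => i _; rewrite mxE mulrDl. Qed.

Lemma dotpZl (R : realType) (d : nat) (a : R) (y x : 'rV[R]_d) :
  dotp (a *: y) x = a * dotp y x.
Proof. by rewrite /dotp mulr_sumr; apply: eq_bigr => i _; rewrite mxE mulrA. Qed.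

Lemma dotpNr (R : realType) (d : nat) (y x : 'rV[R]_d) :
  dotp y (- x) = - dotp y x.
Proof. by rewrite /dotp -sumrN; apply: eq_bigr => i _; rewrite mxE mulrN. Qed.

Lemma dotpNl (R : realType) (d : nat) (y x : 'rV[R]_d) :
  dotp (- y) x = - dotp y x.
Proof. by rewrite -scaleN1r dotpZl mulN1r. Qed.

Lemma norm0 (R : realType) (d : nat) (N : 'rV[R]_d -> R) :
  is_norm N -> N 0 = 0.
Proof. by case=> _ _ hZ _; rewrite -(scale0r (0 : 'rV[R]_d)) hZ normr0 mul0r. Qed.

Lemma normN (R : realType) (d : nat) (N : 'rV[R]_d -> R) w :
  is_norm N -> N (- w) = N w.
Proof. by case=> _ _ hZ _; rewrite -scaleN1r hZ normrN normr1 mul1r. Qed.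

Definition SS (R : realType) (d : nat) (N : 'rV[R]_d -> R) (y : 'rV[R]_d) :=
  [set dotp y w | w in [set w | N w <= 1]].

Lemma SS0 (R : realType) (d : nat) (N : 'rV[R]_d -> R) y :
  is_norm N -> SS N y 0.
Proof.
move=> hN; exists 0; first by rewrite /= (norm0 hN) ler01.
by rewrite /dotp big1 // => i _; rewrite mxE mulr0.
Qed.

Lemma SSn0 (R : realType) (d : nat) (N : 'rV[R]_d -> R) y :
  is_norm N -> SS N y !=set0.
Proof. by move=> hN; exists 0; apply: SS0. Qed.

Lemma dual_out (R : realType) (d : nat) (N : 'rV[R]_d -> R) y :
  ~ has_ubound (SS N y) -> dual_norm N y = 0.
Proof. by move=> h; apply: sup_out => -[]. Qed.

Lemma dual_ge0 (R : realType) (d : nat) (N : 'rV[R]_d -> R) y :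
  is_norm N -> 0 <= dual_norm N y.
Proof.
move=> hN; case: (pselect (has_ubound (SS N y))) => h.
  by apply: (ub_le_sup h); apply: SS0.
by rewrite dual_out.
Qed.

Lemma dual_absle (R : realType) (d : nat) (N : 'rV[R]_d -> R) y w :
  is_norm N -> has_ubound (SS N y) -> N w <= 1 -> `|dotp y w| <= dual_norm N y.
Proof.
move=> hN hs hw; rewrite ler_norml; apply/andP; split.
  rewrite lerNl -dotpNr; apply: (ub_le_sup hs); exists (- w) => //.
  by rewrite /= normN.
by apply: (ub_le_sup hs); exists w.
Qed.

Lemma dual_ubound (R : realType) (d : nat) (N : 'rV[R]_d -> R) y a :
  is_norm N -> has_ubound (SS N y) ->
  ubound (SS N (a *: y)) (`|a| * dual_norm N y).
Proof.
move=> hN hs _ [w hw <-]; rewrite dotpZl.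
apply: le_trans (ler_norm _) _; rewrite normrM.
by apply: ler_wpM2l => //; apply: dual_absle.
Qed.

Lemma dual_scale (R : realType) (d : nat) (N : 'rV[R]_d -> R) y a :
  is_norm N -> dual_norm N (a *: y) = `|a| * dual_norm N y.
Proof.
move=> hN; have [->|a0] := eqVneq a 0.
  rewrite normr0 mul0r; apply: le_anti; rewrite dual_ge0 // andbT.
  apply: ge_sup; first exact: SSn0.
  by move=> _ [w _ <-]; rewrite dotpZl mul0r.
have ya : y = a^-1 *: (a *: y) by rewrite scalerA mulVf // scale1r.
case: (pselect (has_ubound (SS N y))) => h.
  have h' : has_ubound (SS N (a *: y)).
    by exists (`|a| * dual_norm N y); apply: dual_ubound.
  apply: le_anti; apply/andP; split.
    by apply: ge_sup; [apply: SSn0 | apply: dual_ubound].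
  have h1 : dual_norm N y <= `|a^-1| * dual_norm N (a *: y).
    rewrite {1}ya; apply: ge_sup; [apply: SSn0 | apply: dual_ubound] => //.
  have h2 := ler_wpM2l (normr_ge0 a) h1.
  by rewrite normfV mulrA mulfV ?mul1r ?normr_eq0 in h2.
have h' : ~ has_ubound (SS N (a *: y)).
  move=> h'; apply: h; rewrite ya.
  by exists (`|a^-1| * dual_norm N (a *: y)); apply: dual_ubound.
by rewrite !dual_out // mulr0.
Qed.

Lemma dual_subadd (R : realType) (d : nat) (N : 'rV[R]_d -> R) y z :
  is_norm N -> has_ubound (SS N y) -> has_ubound (SS N z) ->
  dual_norm N (y + z) <= dual_norm N y + dual_norm N z.
Proof.
move=> hN hy hz; apply: ge_sup; first exact: SSn0.
move=> _ [w hw <-]; rewrite dotpDl; apply: lerD.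
  by apply: (ub_le_sup hy); exists w.
by apply: (ub_le_sup hz); exists w.
Qed.

Lemma hs_of_dual (R : realType) (d : nat) (N : 'rV[R]_d -> R) y :
  dual_norm N y != 0 -> has_ubound (SS N y).
Proof. by move=> h; apply/not_notP => /dual_out/eqP; apply/negP. Qed.

Lemma margin_leAp (R : realType) (d : nat) (Ap Am : set 'rV[R]_d) y b x :
  Ap x -> (margin Ap Am y b <= (dotp y x + b)%:E)%E.
Proof.
move=> hx; rewrite /margin ge_min; apply/orP; left.
by apply: ereal_inf_lbound; exists x.
Qed.

Lemma margin_leAm (R : realType) (d : nat) (Ap Am : set 'rV[R]_d) y b x :
  Am x -> (margin Ap Am y b <= (- dotp y x - b)%:E)%E.
Proof.
move=> hx; rewrite /margin ge_min; apply/orP; right.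
by apply: ereal_inf_lbound; exists x.
Qed.

Lemma margin_ge (R : realType) (d : nat) (Ap Am : set 'rV[R]_d) y b c :
  (forall x, Ap x -> c <= dotp y x + b) ->
  (forall x, Am x -> c <= - dotp y x - b) -> (c%:E <= margin Ap Am y b)%E.
Proof.
move=> h1 h2; rewrite /margin le_min; apply/andP; split;
  apply: le_ereal_inf_tmp => _ [x hx <-]; rewrite lee_fin; auto.
Qed.

Lemma margin_le_opt (R : realType) (d : nat) (N : 'rV[R]_d -> R) (Ap Am : set 'rV[R]_d) y b :
  dual_norm N y <= 1 -> (margin Ap Am y b <= opt_value N Ap Am)%E.
Proof. by move=> h; apply: ereal_sup_ubound; exists (y, b). Qed.

Theorem mainTheorem4 (R : realType) (d : nat) (N : 'rV[R]_d -> R)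
    (Ap Am : set 'rV[R]_d) :
  is_norm N -> Ap !=set0 -> Am !=set0 ->
  (exists y b, is_optimal N Ap Am y b) ->
  (0 < opt_value N Ap Am)%E ->
  (forall y b, is_optimal N Ap Am y b -> dual_norm N y = 1) /\
  (strictly_convex N -> strictly_convex (dual_norm N) ->
     forall y1 b1 y2 b2, is_optimal N Ap Am y1 b1 -> is_optimal N Ap Am y2 b2 ->
       y1 = y2 /\ b1 = b2).
Proof.
move=> hN [xp hxp] [xm hxm] [y0 [b0 [_ hopt0]]] hpos.
have [v hv vpos] : exists2 v : R, opt_value N Ap Am = v%:E & 0 < v.
  move: hpos; rewrite -hopt0.
  have := margin_leAp Am y0 b0 hxp.
  case: (margin Ap Am y0 b0) => [r| |] //= _ hr.
  by exists r.
have optP : forall y b, is_optimal N Ap Am y b ->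
    (forall x, Ap x -> v <= dotp y x + b) /\
    (forall x, Am x -> v <= - dotp y x - b).
  move=> y b [_ hm]; split=> x hx; rewrite -lee_fin -hv -hm.
    exact: margin_leAp.
  exact: margin_leAm.
have part1 : forall y b, is_optimal N Ap Am y b -> dual_norm N y = 1.
  move=> y b hopt; have [hA hB] := optP y b hopt.
  case: hopt => hd _.
  apply/eqP; rewrite eq_le hd /=; rewrite leNgt; apply/negP => hlt.
  set D := dual_norm N y in hd hlt.
  have D0 : 0 <= D by apply: dual_ge0.
  pose t := 2 / (1 + D).
  have ht : t * D <= 1.
    rewrite /t mulrAC ler_pdivrMr; last by lra.
    lra.
  have ht1 : 1 < t by rewrite /t ltr_pdivlMr; lra.
  have t0 : 0 < t by lra.
  have hd' : dual_norm N (t *: y) <= 1 by rewrite dual_scale // ger0_norm -/D; lra.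
  have hle := @margin_le_opt R d N Ap Am (t *: y) (t * b) hd'.
  have hge : ((t * v)%:E <= margin Ap Am (t *: y) (t * b))%E.
    apply: margin_ge => x hx.
      by rewrite dotpZl -mulrDr; apply: ler_wpM2l; [lra| exact: hA].
    by rewrite dotpZl -mulrN -mulrBr; apply: ler_wpM2l; [lra| exact: hB].
  have := le_trans hge hle; rewrite hv lee_fin => h.
  have : 0 < (t - 1) * v by apply: mulr_gt0; lra.
  rewrite mulrBl mul1r; lra.
split=> // _ hsc y1 b1 y2 b2 h1 h2.
have d1 := part1 _ _ h1; have d2 := part1 _ _ h2.
have [hA1 hB1] := optP _ _ h1; have [hA2 hB2] := optP _ _ h2.
have hs1 : has_ubound (SS N y1) by apply: hs_of_dual; rewrite d1 oner_neq0.
have hs2 : has_ubound (SS N y2) by apply: hs_of_dual; rewrite d2 oner_neq0.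
pose ym := 2^-1 *: y1 + (1 - 2^-1) *: y2.
pose bm := (b1 + b2) / 2.
have hmid : is_optimal N Ap Am ym bm.
  have hd : dual_norm N ym <= 1.
    apply: le_trans (dual_subadd _ _ _) _ => //.
    - by exists (`|2^-1| * dual_norm N y1); apply: dual_ubound.
    - by exists (`|(1 - 2^-1)| * dual_norm N y2); apply: dual_ubound.
    rewrite !dual_scale // d1 d2 !mulr1 !ger0_norm; lra.
  split=> //; apply: le_anti; rewrite margin_le_opt //= hv.
  apply: margin_ge => x hx; rewrite /ym dotpDl !dotpZl /bm.
    by have := hA1 x hx; have := hA2 x hx; lra.
  by have := hB1 x hx; have := hB2 x hx; lra.
have dm := part1 _ _ hmid.
have hcol : collinear y1 y2.
  apply/not_notP => hnc.
  have := hsc (2^-1) y1 y2 _ hnc; rewrite -/ym dm d1 d2.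
  by move=> /(_ _)/=; rewrite !mulr1 => H; have := H _; lra.
case: hcol => a [c [hac hlin]].
have hyc : a *: y1 = (- c) *: y2 by rewrite scaleNr; apply/eqP; rewrite -subr_eq0 opprK hlin.
have habs : `|a| = `|c|.
  by have := congr1 (dual_norm N) hyc; rewrite !dual_scale // d1 d2 !mulr1 normrN.
have a0 : a != 0.
  by case: hac => // hc; apply/negP => /eqP a0; move: habs hc; rewrite a0 normr0 => /eqP; rewrite eq_sym normr_eq0 => ->.
have : y1 = y2 \/ y1 = - y2.
  have e : y1 = a^-1 *: ((- c) *: y2) by rewrite -hyc scalerA mulVf // scale1r.
  rewrite scalerA in e.
  have : `|a^-1 * - c| = 1 by rewrite normrM normrN normfV -habs mulVf // normr_eq0.
  move=> /eqP; rewrite eqr_norml ler01 andbT => /orP[/eqP he|/eqP he]; rewrite he in e.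
    by left; rewrite e scale1r.
  by right; rewrite e scaleN1r.
case=> hy; last first.
  exfalso; subst y1.
  have := hA1 xp hxp; have := hA2 xp hxp; have := hB1 xm hxm; have := hB2 xm hxm.
  rewrite !dotpNl; lra.
subst y2; split=> //.
have hd1 : dual_norm N y1 <= 1 by rewrite d1.
case: (ltgtP b1 b2) => // hb; exfalso.
- have : ((v + (b2 - b1) / 2)%:E <= opt_value N Ap Am)%E.
    apply: le_trans (@margin_le_opt R d N Ap Am y1 ((b1 + b2) / 2) hd1).
    apply: margin_ge => x hx.
      by have := hA1 x hx; lra.
    by have := hB2 x hx; lra.
  rewrite hv lee_fin; lra.
- have : ((v + (b1 - b2) / 2)%:E <= opt_value N Ap Am)%E.
    apply: le_trans (@margin_le_opt R d N Ap Am y1 ((b1 + b2) / 2) hd1).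
    apply: margin_ge => x hx.
      by have := hA2 x hx; lra.
    by have := hB1 x hx; lra.
  rewrite hv lee_fin; lra.
Qed.
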